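(* Let $\lambda,\alpha_1,\alpha_2\in\mathbb{C}^*$ and $h_1=\xi_1t+\eta_1$, $h_2=\xi_2t+\eta_2\in\mathbb{C}[t]$ with $\alpha_1\xi_1=\alpha_2\xi_2\neq 0$. Define complex numbers $b_i$ ($i\in\mathbb{Z}_+$) by $b_0=1$, $b_1=0$, $b_{i+1}=ib_i+i(\eta_2-\eta_1)b_{i-1}$ for $i\in\mathbb{N}$, and polynomials $g_n(x)=\sum_{i=0}^n\binom{n}{i}b_{n-i}x^i$ for $n\in\mathbb{Z}_+$. Let $\phi:\Omega(\lambda,\alpha_1,h_1)\to\Omega(\lambda,\alpha_2,h_2)$ be the linear map with $\phi(s^ih_1^n)=s^ig_n(h_2)$ for all $n,i\in\mathbb{Z}_+$ (here $\{s^ih_1^n\}$ is a basis of $\mathbb{C}[t,s]$). Then $\phi$ is an isomorphism of $\mathrm{Vir}$-modules.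
   Context: $\mathrm{Vir}$ is the Lie algebra with basis $\{d_i,c\mid i\in\mathbb{Z}\}$ and brackets $[d_i,d_j]=(j-i)d_{i+j}+\delta_{i,-j}\frac{i^3-i}{12}c$, $[c,d_i]=0$. For $\lambda\in\mathbb{C}^*$, $\alpha\in\mathbb{C}$, $h\in\mathbb{C}[t]$, define operators on $\mathbb{C}[t]$ by $F(f)=\frac{h(t)-h(\alpha)}{t-\alpha}f(t)-f'(t)$ and $G(f)=h(\alpha)f+tF(f)$. The $\mathrm{Vir}$-module $\Omega(\lambda,\alpha,h)$ is the vector space $\mathbb{C}[t,s]$ with $c$ acting as $0$ and $d_m(f(t)s^i)=\lambda^m(s-m)^i\big(sf+mG(f)-m^2\alpha F(f)\big)$ for $m\in\mathbb{Z}$, $i\in\mathbb{Z}_+$, $f\in\mathbb{C}[t]$. *)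

(* Defs.v *)
From HB Require Import structures.
From mathcomp Require Import all_boot all_order all_algebra.
From mathcomp Require Import complex.
From mathcomp Require Import Rstruct.
From Stdlib Require Import Rdefinitions.

Set Implicit Arguments.
Unset Strict Implicit.
Unset Printing Implicit Defensive.

Import Order.TTheory GRing.Theory Num.Theory.
Local Open Scope ring_scope.

Definition C : Type := complex Rdefinitions.R.
HB.instance Definition _ := GRing.Field.on C.

(* C[t,s] is represented as {poly {poly C}}: the outer variable 'X is s,
   coefficients are polynomials in t.  An element P is  sum_i P`_i(t) s^i. *)
Notation Vspace := {poly {poly C}}.

Definition svar : Vspace := 'X.
Definition tpoly (f : {poly C}) : Vspace := f%:P.
Definition cst (a : C) : Vspace := a%:P%:P.

Section Omega.
Variables (lam al : C) (h : {poly C}).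

Definition Fop (f : {poly C}) : {poly C} :=
  ((h - (h.[al])%:P) %/ ('X - al%:P)) * f - f^`().

Definition Gop (f : {poly C}) : {poly C} := h.[al] *: f + 'X * Fop f.

(* d_m (f(t) s^i) = lam^m (s - m)^i (s f + m G(f) - m^2 al F(f)) *)
Definition d_basic (m : int) (f : {poly C}) (i : nat) : Vspace :=
  cst (lam ^ m) * (svar - cst (m%:~R)) ^+ i *
  (svar * tpoly f + tpoly ((m%:~R : C) *: Gop f)
    - tpoly (((m ^+ 2)%:~R * al) *: Fop f)).

Definition d_act (m : int) (P : Vspace) : Vspace :=
  \sum_(i < size P) d_basic m P`_i i.

End Omega.

Inductive vir_basis := Vd of int | Vc.

Definition Omega_act (lam al : C) (h : {poly C}) (x : vir_basis) (P : Vspace)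
  : Vspace :=
  match x with
  | Vd m => d_act lam al h m P
  | Vc => 0
  end.

Definition Clinear (phi : Vspace -> Vspace) : Prop :=
  forall (a : C) (u v : Vspace), phi (cst a * u + v) = cst a * phi u + phi v.

(* An isomorphism of Vir-modules Omega(lam,a1,h1) -> Omega(lam,a2,h2):
   a C-linear bijection commuting with the action of every basis element
   of Vir (hence, by linearity, of every element of Vir). *)
Definition Vir_iso (lam a1 a2 : C) (h1 h2 : {poly C}) (phi : Vspace -> Vspace)
  : Prop :=
  [/\ Clinear phi, bijective phi &
      forall (x : vir_basis) (P : Vspace),
        phi (Omega_act lam a1 h1 x P) = Omega_act lam a2 h2 x (phi P)].

(* b_0 = 1, b_1 = 0, b_{i+1} = i b_i + i e b_{i-1};  bpair e n = (b_n, b_{n+1}) *)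
Fixpoint bpair (e : C) (n : nat) : C * C :=
  match n with
  | 0 => (1, 0)
  | k.+1 => let: (x, y) := bpair e k in
            (y, (k.+1)%:R * y + (k.+1)%:R * e * x)
  end.

Definition bseq (e : C) (n : nat) : C := (bpair e n).1.

Definition gpoly (e : C) (n : nat) : {poly C} :=
  \sum_(i < n.+1) (('C(n, i))%:R * bseq e (n - i)) *: 'X^i.

(* Main.v *)
Require Import Defs.
From HB Require Import structures.
From mathcomp Require Import all_boot all_order all_algebra.
From mathcomp Require Import ring complex Rstruct.
From Stdlib Require Import ClassicalEpsilon.
Import Order.TTheory GRing.Theory Num.Theory.
Local Open Scope ring_scope.

Lemma natC_eq0 (n : nat) : ((n%:R : C) == 0) = (n == 0%N).
Proof. exact: (@pnatr_eq0 (complex Rdefinitions.R) n). Qed.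

Lemma bseqSS e k :
  Defs.bseq e k.+2 = k.+1%:R * Defs.bseq e k.+1 + k.+1%:R * e * Defs.bseq e k.
Proof. rewrite /Defs.bseq /=. by case: (bpair e k). Qed.

Lemma gcoef e n k : (gpoly e n)`_k = ('C(n, k))%:R * Defs.bseq e (n - k).
Proof.
rewrite /gpoly -(poly_def n.+1 (fun i => ('C(n, i))%:R * Defs.bseq e (n - i))) coef_poly.
by case: ltnP => // H; rewrite bin_small ?mul0r.
Qed.

Lemma gderiv e n : (gpoly e n)^`() = n%:R *: gpoly e n.-1.
Proof.
apply/polyP => k; rewrite coef_deriv coefZ !gcoef.
case: n => [|n]; first by rewrite bin_small // !mul0r mul0rn.
rewrite subSS /= -mulr_natl mulrA -natrM mul_bin_diag natrM; ring.

Qed.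

Lemma poly_deriv0 (p : {poly C}) : p^`() = 0 -> p.[0] = 0 -> p = 0.
Proof.
move=> Hd H0; apply/polyP => k; rewrite coef0.
case: k => [|k]; first by rewrite -horner_coef0.
move/polyP: Hd => /(_ k); rewrite coef_deriv coef0 => /eqP.
by rewrite -mulr_natr mulf_eq0 natC_eq0 /= orbF => /eqP.
Qed.

Definition Qg e n := gpoly e n.+1 - ('X + n%:R%:P) * gpoly e n
   - n%:R *: ((e%:P - 'X) * gpoly e n.-1).

Lemma ghorner0 e n : (gpoly e n).[0] = Defs.bseq e n.
Proof. by rewrite horner_coef0 gcoef bin0 subn0 mul1r. Qed.

Lemma Qg_deriv e n : (Qg e n)^`() = n%:R *: Qg e n.-1.
Proof.
rewrite /Qg !(derivB, derivN, derivD, derivM, derivZ, derivX, derivC, gderiv).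
case: n => [|n] /=; rewrite -!mul_polyC; ring.
Qed.

Lemma Qg0 e n : Qg e n = 0.
Proof.
elim: n => [|n IH]; apply: poly_deriv0.
- by rewrite Qg_deriv scale0r.
- rewrite /Qg !(hornerD, hornerN, hornerZ, hornerM, hornerX, hornerC, ghorner0).
  rewrite (_ : Defs.bseq e 1 = 0) //=. ring.
- by rewrite Qg_deriv /= IH scaler0.
- rewrite /Qg !(hornerD, hornerN, hornerZ, hornerM, hornerX, hornerC, ghorner0).
  rewrite bseqSS /=. ring.
Qed.

Lemma gpolyS e n : gpoly e n.+1 =
  ('X + n%:R%:P) * gpoly e n + n%:R *: ((e%:P - 'X) * gpoly e n.-1).
Proof.
by apply/eqP; rewrite -subr_eq0 opprD addrA; apply/eqP; apply: Qg0.
Qed.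

Definition Tu (c es M : C) (G : {poly C}) : {poly C} :=
  M *: ((c + es) *: G + ('X - es%:P) * (G - G^`())) - (M^+2 * c) *: (G - G^`()).

Lemma Tu_expand c es eb M (n : nat) G Gm Gp :
  G^`() = n%:R *: Gm ->
  Gp = ('X + n%:R%:P) * G + n%:R *: (((es - eb)%:P - 'X) * Gm) ->
  Tu c es M G = M *: Gp + (M * (c - n%:R) - M^+2 * c) *: G
               + (M * n%:R * eb + M^+2 * c * n%:R) *: Gm.
Proof. move=> H1 H2; rewrite /Tu H1 H2 -!mul_polyC; ring. Qed.

Lemma Xn_deriv n : (('X^n)^`() : {poly C}) = n%:R *: 'X^(n.-1).
Proof. by rewrite derivXn scaler_nat. Qed.

Lemma Xn_rec (e : C) n : 'X^(n.+1) =
  ('X + n%:R%:P) * 'X^n + n%:R *: (((e - e)%:P - 'X) * 'X^(n.-1)).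
Proof.
case: n => [|n] /=; first by rewrite scale0r addr0 addr0 expr1 expr0 mulr1.
rewrite subrr !exprS -!mul_polyC; ring.
Qed.

Lemma Fop_comp a x e G :
  Fop a (x *: 'X + e%:P) (G \Po (x *: 'X + e%:P)) =
  x *: ((G - G^`()) \Po (x *: 'X + e%:P)).
Proof.
rewrite /Fop; set h := x *: 'X + e%:P.
have -> : (h - (h.[a])%:P) %/ ('X - a%:P) = x%:P.
  have -> : h - (h.[a])%:P = x%:P * ('X - a%:P).
    rewrite /h !hornerE -!mul_polyC; ring.
  by rewrite mulpK // monic_neq0 // monicXsubC.
rewrite deriv_comp /h derivD derivZ derivX derivC addr0 comp_polyB.
rewrite -!mul_polyC; ring.
Qed.

Lemma Gop_comp a x e G :
  Gop a (x *: 'X + e%:P) (G \Po (x *: 'X + e%:P)) =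
  ((a * x + e) *: G + ('X - e%:P) * (G - G^`())) \Po (x *: 'X + e%:P).
Proof.
rewrite /Gop Fop_comp !hornerE.
rewrite !(comp_polyB, comp_polyD, comp_polyZ, comp_polyM, comp_polyX, comp_polyC).
rewrite -!mul_polyC; ring.
Qed.

Lemma d_basic_comp lam a x e m i G :
  d_basic lam a (x *: 'X + e%:P) m (G \Po (x *: 'X + e%:P)) i =
  cst (lam ^ m) * (svar - cst (m%:~R)) ^+ i *
  (svar * tpoly (G \Po (x *: 'X + e%:P)) +
   tpoly (Tu (a * x) e (m%:~R) G \Po (x *: 'X + e%:P))).
Proof.
rewrite /d_basic Fop_comp Gop_comp /tpoly -addrA -polyCB.
congr (_ * (_ + _%:P)).
rewrite /Tu !(comp_polyB, comp_polyD, comp_polyZ, comp_polyM, comp_polyX, comp_polyC) -!mul_polyC.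
rewrite expr2 intrM; ring.
Qed.

Lemma d_basic0 lam al h m i : d_basic lam al h m 0 i = 0.
Proof.
rewrite /d_basic /Gop /Fop deriv0 !mulr0 subr0 !scaler0 !mulr0 !addr0.
by rewrite /tpoly polyC0 !(mulr0, addr0, subr0, scaler0).
Qed.

Lemma d_act_pad lam al h m (P : Vspace) n : (size P <= n)%N ->
  d_act lam al h m P = \sum_(i < n) d_basic lam al h m P`_i i.
Proof.
move=> Hn; rewrite /d_act -!(big_mkord xpredT (fun i => d_basic lam al h m P`_i i)).
rewrite (big_cat_nat (leq0n _) Hn) /= [X in _ + X]big1_seq ?addr0 // => i.
rewrite mem_index_iota => /andP[_ /andP[Hi _]].
by rewrite nth_default // d_basic0.
Qed.

Lemma Fop_lin al h a f g : Fop al h (a%:P * f + g) = a%:P * Fop al h f + Fop al h g.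
Proof. rewrite /Fop derivD derivM derivC mul0r add0r; ring. Qed.

Lemma Gop_lin al h a f g : Gop al h (a%:P * f + g) = a%:P * Gop al h f + Gop al h g.
Proof. rewrite /Gop Fop_lin -!mul_polyC; ring. Qed.

Lemma d_basic_lin lam al h m i a f g :
  d_basic lam al h m (a%:P * f + g) i =
  cst a * d_basic lam al h m f i + d_basic lam al h m g i.
Proof. rewrite /d_basic Fop_lin Gop_lin /tpoly /cst -!mul_polyC; ring. Qed.

Lemma d_act_lin lam al h m a (P Q : Vspace) :
  d_act lam al h m (cst a * P + Q) =
  cst a * d_act lam al h m P + d_act lam al h m Q.
Proof.
set n := maxn (size P) (size Q).
have HP : (size P <= n)%N by rewrite leq_maxl.
have HQ : (size Q <= n)%N by rewrite leq_maxr.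
have HPQ : (size (cst a * P + Q)%R <= n)%N.
  apply: leq_trans (size_add _ _) _; rewrite geq_max HQ andbT.
  by rewrite /cst mul_polyC (leq_trans (size_scale_leq _ _)).
rewrite !(d_act_pad _ _ _ _ _ _ HP, d_act_pad _ _ _ _ _ _ HQ, d_act_pad _ _ _ _ _ _ HPQ).
rewrite mulr_sumr -big_split /=; apply: eq_bigr => i _.
by rewrite coefD coefCM d_basic_lin.
Qed.

Lemma d_act_basis lam al h m i f :
  d_act lam al h m (svar ^+ i * tpoly f) = d_basic lam al h m f i.
Proof.
have Hs : (size (svar ^+ i * tpoly f)%R <= i.+1)%N.
  rewrite /svar /tpoly mulrC mul_polyC (leq_trans (size_scale_leq _ _)) //.
  by rewrite size_polyXn.
rewrite (d_act_pad _ _ _ _ _ _ Hs) big_ord_recr /= big1 ?add0r => [|j _].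
  by rewrite /svar /tpoly coefXnM ltnn subnn coefC.
by rewrite /svar /tpoly coefXnM ltn_ord d_basic0.
Qed.

Definition lin (x e : C) : {poly C} := x *: 'X + e%:P.
Definition linv (x e : C) : {poly C} := x^-1 *: ('X - e%:P).

Lemma comp_linv_lin x e : x != 0 -> linv x e \Po lin x e = 'X.
Proof.
move=> x0; rewrite /linv /lin comp_polyZ comp_polyB comp_polyX comp_polyC.
by rewrite addrK scalerA mulVf // scale1r.
Qed.

Lemma comp_lin_linv x e : x != 0 -> lin x e \Po linv x e = 'X.
Proof.
move=> x0; rewrite /linv /lin comp_polyD comp_polyZ comp_polyX comp_polyC.
by rewrite scalerA mulfV // scale1r subrK.
Qed.

Lemma sumK (K : Vspace -> Prop) (I : Type) (r : seq I) (Pr : pred I)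
  (F : I -> Vspace) :
  (forall j v, K v -> K (F j + v)) ->
  forall v, K v -> K (\sum_(j <- r | Pr j) F j + v).
Proof.
move=> HF; apply: (big_rec (fun y => forall v, K v -> K (y + v))).
  by move=> v Kv; rewrite add0r.
by move=> j y _ IH v Kv; rewrite -addrA; apply: HF; apply: IH.
Qed.

Lemma span_ind x e (K : Vspace -> Prop) : x != 0 -> K 0 ->
  (forall a i n v, K v -> K (cst a * (svar ^+ i * tpoly (lin x e ^+ n)) + v)) ->
  forall P, K P.
Proof.
move=> x0 K0 KS P.
rewrite -[P]coefK poly_def -[X in K X]addr0; apply: sumK => // i v Kv.
set f := P`_i.
have -> : f *: 'X^i = \sum_(k < size (f \Po linv x e))
    cst ((f \Po linv x e)`_k) * (svar ^+ i * tpoly (lin x e ^+ k)).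
  rewrite -mul_polyC {1}(_ : f = (f \Po linv x e) \Po lin x e); last first.
    by rewrite -comp_polyA comp_linv_lin // comp_polyXr.
  rewrite comp_polyE rmorph_sum mulr_suml; apply: eq_bigr => k _.
  rewrite -mul_polyC /cst /svar /tpoly; ring.
by apply: sumK => // k w Kw; apply: KS.
Qed.

Definition psiu (e : C) (F : {poly C}) : {poly C} :=
  \sum_(k < size F) F`_k *: gpoly e k.

Lemma psiu_pad e (F : {poly C}) n : (size F <= n)%N -> psiu e F = \sum_(k < n) F`_k *: gpoly e k.
Proof.
move=> Hn; rewrite /psiu -!(big_mkord xpredT (fun k => F`_k *: gpoly e k)).
rewrite (big_cat_nat (leq0n _) Hn) /= [X in _ + X]big1_seq ?addr0 // => i.
rewrite mem_index_iota => /andP[_ /andP[Hi _]].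
by rewrite nth_default // scale0r.
Qed.

Lemma psiu_lin e a (F G : {poly C}) : psiu e (a *: F + G) = a *: psiu e F + psiu e G.
Proof.
set n := maxn (size F) (size G).
have HF : (size F <= n)%N by rewrite leq_maxl.
have HG : (size G <= n)%N by rewrite leq_maxr.
have HFG : (size (a *: F + G)%R <= n)%N.
  apply: leq_trans (size_add _ _) _; rewrite geq_max HG andbT.
  exact: leq_trans (size_scale_leq _ _) _.
rewrite !(psiu_pad e _ _ HF, psiu_pad e _ _ HG, psiu_pad e _ _ HFG).
rewrite scaler_sumr -big_split /=; apply: eq_bigr => i _.
by rewrite coefD coefZ scalerDl scalerA.
Qed.

Lemma psiu0 e : psiu e 0 = 0.
Proof. by rewrite /psiu size_poly0 big_ord0. Qed.

Lemma psiu_Xn e n : psiu e 'X^n = gpoly e n.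
Proof.
rewrite /psiu size_polyXn big_ord_recr /= big1 ?add0r => [|j _].
  by rewrite coefXn eqxx scale1r.
by rewrite coefXn (ltn_eqF (ltn_ord j)) scale0r.
Qed.

Definition psit (e x1 e1 x2 e2 : C) (f : {poly C}) : {poly C} :=
  psiu e (f \Po linv x1 e1) \Po lin x2 e2.

Lemma psit_lin (e x1 e1 x2 e2 : C) a f g :
  psit e x1 e1 x2 e2 (a%:P * f + g) =
  a%:P * psit e x1 e1 x2 e2 f + psit e x1 e1 x2 e2 g.
Proof.
by rewrite /psit comp_polyD mul_polyC comp_polyZ psiu_lin comp_polyD
  comp_polyZ mul_polyC.
Qed.

Lemma psit0 (e x1 e1 x2 e2 : C) : psit e x1 e1 x2 e2 0 = 0.
Proof. by rewrite /psit comp_poly0 psiu0 comp_poly0. Qed.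

Lemma psit_pow (e x1 e1 x2 e2 : C) n : x1 != 0 ->
  psit e x1 e1 x2 e2 (lin x1 e1 ^+ n) = gpoly e n \Po lin x2 e2.
Proof.
move=> x0; rewrite /psit -comp_Xn_poly -comp_polyA comp_lin_linv //.
by rewrite comp_polyXr psiu_Xn.
Qed.

Lemma gsize e n : size (gpoly e n) = n.+1.
Proof.
rewrite /gpoly -(poly_def n.+1 (fun i => ('C(n, i))%:R * Defs.bseq e (n - i))).
by rewrite size_poly_eq //= binn subnn mul1r oner_neq0.
Qed.

Lemma size_psum e N (c : nat -> C) :
  (size (\sum_(k < N) c k *: gpoly e k)%R <= N)%N.
Proof.
elim: N => [|N IH]; first by rewrite big_ord0 size_poly0.
rewrite big_ord_recr /=; apply: leq_trans (size_add _ _) _.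
rewrite geq_max (leq_trans IH) //=.
by apply: leq_trans (size_scale_leq _ _) _; rewrite gsize.
Qed.

Lemma psiu_inj0 {e} {F : {poly C}} : psiu e F = 0 -> F = 0.
Proof.
move=> H; apply/eqP; rewrite -size_poly_eq0; apply/eqP.
move: H; rewrite /psiu; case E: (size F) => [|N] //.
rewrite big_ord_recr /= addrC => H.
have HN : F`_N != 0.
  have : lead_coef F != 0 by rewrite lead_coef_eq0 -size_poly_eq0 E.
  by rewrite lead_coefE E.
have := congr1 (fun p : {poly C} => size p) H; rewrite /= size_polyDl size_scale // ?gsize ?size_poly0 //.
by rewrite ltnS size_psum.
Qed.

Lemma psit_inj0 (e x1 e1 x2 e2 : C) f : x1 != 0 -> x2 != 0 ->
  psit e x1 e1 x2 e2 f = 0 -> f = 0.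
Proof.
move=> x10 x20; rewrite /psit => H.
have H1 : psiu e (f \Po linv x1 e1) = 0.
  by rewrite -[LHS]comp_polyXr -(comp_lin_linv x2 e2 x20) comp_polyA H comp_poly0.
have H2 := psiu_inj0 H1.
by rewrite -[f]comp_polyXr -(comp_linv_lin x1 e1 x10) comp_polyA H2 comp_poly0.
Qed.

Lemma psit_inj (e x1 e1 x2 e2 : C) : x1 != 0 -> x2 != 0 ->
  injective (psit e x1 e1 x2 e2).
Proof.
move=> x10 x20 f g H.
have : psit e x1 e1 x2 e2 ((-1)%:P * g + f) = 0.
  by rewrite psit_lin H polyCN mulN1r addNr.
move/(@psit_inj0 e x1 e1 x2 e2 _ x10 x20)/eqP; rewrite polyCN mulN1r addrC subr_eq0.
by move/eqP.
Qed.

Lemma psiu_img e (K : {poly C} -> Prop) :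
  K =1 (fun G => exists F, psiu e F = G) ->
  (K 0 /\ forall a A B, K A -> K B -> K (a *: A + B)).
Proof.
move=> HK; split.
  by rewrite HK; exists 0; rewrite psiu0.
move=> a A B; rewrite !HK => [[FA <-] [FB <-]].
by exists (a *: FA + FB); rewrite psiu_lin.
Qed.

Lemma psiu_surj e G : exists F, psiu e F = G.
Proof.
pose K := fun G => exists F, psiu e F = G.
have [K0 KS] := @psiu_img e K (fun _ => erefl).
have Ksum : forall (I : Type) (r : seq I) (c : I -> C) (Fs : I -> {poly C}),
    (forall j, K (Fs j)) -> K (\sum_(j <- r) c j *: Fs j).
  move=> I r c Fs HF; apply: (big_rec K) => // j y _ Ky.
  exact: KS.
have KX : forall n, K 'X^n.
  elim/ltn_ind => n IH.
  have -> : 'X^n = gpoly e n + \sum_(i < n) (- (('C(n, i))%:R * Defs.bseq e (n - i))) *: 'X^i.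
    rewrite /gpoly big_ord_recr /= binn subnn mul1r scale1r addrAC -big_split /= big1 ?add0r // => i _.

    by rewrite scaleNr addrN.
  rewrite -[gpoly e n]scale1r; apply: KS; first by exists 'X^n; rewrite psiu_Xn.
  by apply: Ksum => j; apply: IH.
rewrite -[G]coefK poly_def; exact: Ksum.
Qed.

Lemma psit_surj (e x1 e1 x2 e2 : C) g : x1 != 0 -> x2 != 0 ->
  exists f, psit e x1 e1 x2 e2 f = g.
Proof.
move=> x10 x20; have [F HF] := psiu_surj e (g \Po linv x2 e2).
exists (F \Po lin x1 e1); rewrite /psit -comp_polyA comp_lin_linv // comp_polyXr HF.
by rewrite -comp_polyA comp_linv_lin // comp_polyXr.
Qed.

Definition Phi0 (e x1 e1 x2 e2 : C) (P : Vspace) : Vspace :=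
  map_poly (psit e x1 e1 x2 e2) P.

Lemma Phi0_lin (e x1 e1 x2 e2 : C) : Clinear (Phi0 e x1 e1 x2 e2).
Proof.
move=> a u v; apply/polyP => i.
rewrite /Phi0 coefD coefCM !coef_map_id0 ?psit0 //.
by rewrite coefD coefCM psit_lin.
Qed.

Lemma Phi0_basis (e x1 e1 x2 e2 : C) n i : x1 != 0 ->
  Phi0 e x1 e1 x2 e2 (svar ^+ i * tpoly (lin x1 e1 ^+ n)) =
  svar ^+ i * tpoly (gpoly e n \Po lin x2 e2).
Proof.
move=> x10; apply/polyP => j.
rewrite /Phi0 coef_map_id0 ?psit0 // /svar /tpoly !coefXnM.
case: ltnP => _; first by rewrite psit0.
rewrite !coefC; case: eqP => _; last by rewrite psit0.
exact: psit_pow.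
Qed.

Lemma Phi0_bij (e x1 e1 x2 e2 : C) : x1 != 0 -> x2 != 0 ->
  bijective (Phi0 e x1 e1 x2 e2).
Proof.
move=> x10 x20.
pose pinv := fun g : {poly C} => proj1_sig (constructive_indefinite_description _
   (psit_surj e x1 e1 x2 e2 g x10 x20)).
have Hp1 : forall g, psit e x1 e1 x2 e2 (pinv g) = g.
  by move=> g; rewrite /pinv; case: constructive_indefinite_description.
have Hp2 : forall f, pinv (psit e x1 e1 x2 e2 f) = f.
  by move=> f; apply: (@psit_inj e x1 e1 x2 e2 x10 x20); rewrite Hp1.
have Hp0 : pinv 0 = 0 by have := Hp2 0; rewrite psit0.
exists (map_poly pinv) => P; apply/polyP => i.
  by rewrite !coef_map_id0 ?psit0 // Hp2.
by rewrite /Phi0 !coef_map_id0 ?psit0 // Hp1.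
Qed.

Lemma tpolyD f g : tpoly (f + g) = tpoly f + tpoly g.
Proof. by rewrite /tpoly polyCD. Qed.
Lemma tpolyZ a f : tpoly (a *: f) = cst a * tpoly f.
Proof. by rewrite /tpoly /cst -mul_polyC polyCM. Qed.

Theorem lemma3p3 (lam a1 a2 x1 e1 x2 e2 : C) :
  lam != 0 -> a1 != 0 -> a2 != 0 ->
  a1 * x1 = a2 * x2 -> a1 * x1 != 0 ->
  let h1 := x1 *: 'X + e1%:P in
  let h2 := x2 *: 'X + e2%:P in
  let spec (phi : Vspace -> Vspace) :=
    Clinear phi /\
    forall n i : nat,
      phi (svar ^+ i * tpoly (h1 ^+ n)) =
      svar ^+ i * tpoly (gpoly (e2 - e1) n \Po h2) in
  (exists phi, spec phi) /\
  (forall phi, spec phi -> Vir_iso lam a1 a2 h1 h2 phi).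
Proof.
move=> lam0 a10 a20 Hc Hc0; cbv zeta.
have x10 : x1 != 0 by apply: contraNneq Hc0 => ->; rewrite mulr0.
have x20 : x2 != 0 by move: Hc0; rewrite Hc; apply: contraNneq => ->; rewrite mulr0.
split.
  exists (Phi0 (e2 - e1) x1 e1 x2 e2); split; first exact: Phi0_lin.
  by move=> n i; apply: Phi0_basis.
move=> phi [Hlin Hbas].
have phi0 : phi 0 = 0.
  have H := Hlin 1 0 0; move: H; rewrite mulr0 add0r /cst !polyC1 mul1r => H.
  by apply: (@addrI _ (phi 0)); rewrite addr0 -H.
have phiD : forall u v, phi (u + v) = phi u + phi v.
  by move=> u v; have := Hlin 1 u v; rewrite /cst !polyC1 !mul1r.
have phiZ : forall a u, phi (cst a * u) = cst a * phi u.
  by move=> a u; have := Hlin a u 0; rewrite !addr0 phi0 addr0.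
have phiN : forall u, phi (- u) = - phi u.
  move=> u; have := Hlin (-1) u 0.
  by rewrite addr0 phi0 addr0 /cst !polyCN !polyC1 !mulN1r.
have Hbas0 : forall n, phi (tpoly ((x1 *: 'X + e1%:P) ^+ n)) =
    tpoly (gpoly (e2 - e1) n \Po (x2 *: 'X + e2%:P)).
  by move=> n; have := Hbas n 0; rewrite expr0 !mul1r.
have phiS : forall P, phi (svar * P) = svar * phi P.
  apply: (@span_ind x1 e1) => // [|a i n v IH]; first by rewrite mulr0 phi0 mulr0.
  have -> : svar * (cst a * (svar ^+ i * tpoly (lin x1 e1 ^+ n)) + v) =
     cst a * (svar ^+ i.+1 * tpoly (lin x1 e1 ^+ n)) + svar * v.
    by rewrite exprS; ring.
  by rewrite !Hlin !Hbas IH exprS; ring.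
have phiSM : forall M i P, phi ((svar - cst M) ^+ i * P) = (svar - cst M) ^+ i * phi P.
  move=> M; elim=> [|i IH] P; first by rewrite !expr0 !mul1r.
  rewrite exprS -!mulrA mulrBl phiD phiN phiS phiZ IH; ring.
have phi_eq : forall P, Phi0 (e2 - e1) x1 e1 x2 e2 P = phi P.
  apply: (@span_ind x1 e1 (fun P => Phi0 (e2 - e1) x1 e1 x2 e2 P = phi P)) => //; first by rewrite phi0 /Phi0 map_poly0.
  move=> b j k w IH.
  by rewrite (Phi0_lin (e2 - e1) x1 e1 x2 e2 b) Hlin IH Phi0_basis // /lin Hbas.
have Hmain : forall m P, phi (d_act lam a1 (x1 *: 'X + e1%:P) m P) =
    d_act lam a2 (x2 *: 'X + e2%:P) m (phi P).
  move=> m; apply: (@span_ind x1 e1 (fun P => phi (d_act lam a1 (x1 *: 'X + e1%:P) m P) =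
    d_act lam a2 (x2 *: 'X + e2%:P) m (phi P))) => //.
    by rewrite phi0 /d_act size_poly0 !big_ord0 phi0.
  move=> b j k w IH.
  rewrite d_act_lin phiD phiZ IH Hlin d_act_lin; congr (_ * _ + _).
  rewrite Hbas !d_act_basis /lin.
  rewrite -[(x1 *: 'X + e1%:P) ^+ k]comp_Xn_poly !d_basic_comp -Hc.
  rewrite (@Tu_expand _ e1 e1 _ k _ 'X^(k.-1) 'X^(k.+1) (Xn_deriv k) (Xn_rec e1 k)).
  rewrite (@Tu_expand _ e2 e1 _ k _ _ _ (gderiv (e2 - e1) k) (gpolyS (e2 - e1) k)).
  rewrite !(comp_polyD, comp_polyZ, comp_Xn_poly, tpolyD, tpolyZ).
  rewrite -mulrA phiZ phiSM !phiD phiS !phiZ !Hbas0.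
  by rewrite -[RHS]mulrA.
split => //.
  have := eq_bij (Phi0_bij (e2 - e1) x1 e1 x2 e2 x10 x20) phi_eq. by [].
case=> [m|] P /=; first exact: Hmain.
by rewrite phi0.
Qed.
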